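(* Let $\mathbb E$ be a finitely complete category such that, for every object $X$, every internal group in $Pt_X\mathbb E$ has as underlying split epimorphism an isomorphism. Then for every object $X$, every internal reflexive graph on $X$ that admits an internal groupoid structure is a relation on $X$, i.e. it is a subobject of the indiscrete relation $\nabla_X$ in $RGh_X\mathbb E$ (equivalently $(d_0,d_1):X_1\to X\times X$ is a monomorphism).
   Context: $Pt_X\mathbb E$ is the category of split epimorphisms $f:A\to X$ with chosen section $s$, morphisms commuting with $f$ and $s$. An internal reflexive graph on $X$ is $d_0,d_1:X_1\to X$ with $s_0:X\to X_1$, $d_0s_0=1=d_1s_0$; $RGh_X\mathbb E$ is the category of these with morphisms identity on $X$, having terminal object $\nabla_X=(X\times X,p_0,p_1,(1,1))$. An internal groupoid structure on such a graph is an associative unital composition on $X_1\times_XX_1$ with identities $s_0$ and inverses. *)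

(* Defs.v *)
Declare Scope cat_scope.
Set Implicit Arguments.
Unset Strict Implicit.

Record Category := {
  Ob :> Type;
  Hom : Ob -> Ob -> Type;
  comp : forall (a b c : Ob), Hom b c -> Hom a b -> Hom a c;
  idm : forall a : Ob, Hom a a;
  comp_assoc : forall a b c d (h : Hom c d) (g : Hom b c) (f : Hom a b),
      comp h (comp g f) = comp (comp h g) f;
  comp_id_l : forall a b (f : Hom a b), comp (idm b) f = f;
  comp_id_r : forall a b (f : Hom a b), comp f (idm a) = f
}.
Arguments comp {C a b c} _ _ : rename.
Arguments idm {C} a : rename.
Arguments Hom {C} _ _ : rename.

Notation "g \o f" := (comp g f) (at level 40, left associativity) : cat_scope.
Open Scope cat_scope.

Section Defs.
Variable C : Category.

Definition is_iso {a b : C} (f : Hom a b) : Prop :=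
  exists g : Hom b a, g \o f = idm a /\ f \o g = idm b.

Definition is_mono {a b : C} (f : Hom a b) : Prop :=
  forall (y : C) (g h : Hom y a), f \o g = f \o h -> g = h.

Definition is_terminal (t : C) : Prop :=
  forall a : C, exists u : Hom a t, forall v : Hom a t, v = u.

Definition is_pullback {A B Z P : C} (f : Hom A Z) (g : Hom B Z)
    (p1 : Hom P A) (p2 : Hom P B) : Prop :=
  f \o p1 = g \o p2 /\
  forall (Q : C) (q1 : Hom Q A) (q2 : Hom Q B), f \o q1 = g \o q2 ->
    exists u : Hom Q P, (p1 \o u = q1 /\ p2 \o u = q2) /\
      forall v : Hom Q P, p1 \o v = q1 -> p2 \o v = q2 -> v = u.

Definition is_product {A B P : C} (p1 : Hom P A) (p2 : Hom P B) : Prop :=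
  forall (Q : C) (q1 : Hom Q A) (q2 : Hom Q B),
    exists u : Hom Q P, (p1 \o u = q1 /\ p2 \o u = q2) /\
      forall v : Hom Q P, p1 \o v = q1 -> p2 \o v = q2 -> v = u.

Definition finitely_complete : Prop :=
  (exists t : C, is_terminal t) /\
  forall (A B Z : C) (f : Hom A Z) (g : Hom B Z),
    exists (P : C) (p1 : Hom P A) (p2 : Hom P B), is_pullback f g p1 p2.

(* An internal group in Pt_X C on the point (A, f, s), where (P, p1, p2) is
   the product (A,f,s) x (A,f,s) in Pt_X C, i.e. the pullback A x_X A of f
   along f.  Multiplication m : P -> A and inverse i : A -> A are morphisms
   in Pt_X C; the unit is necessarily the section s (the unique morphism from
   the terminal object (X,1,1) of Pt_X C).  The group axioms are the
   commutative diagrams, written on generalized elements u : Y -> P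
   (u stands for the pair (p1 u, p2 u)). *)
Definition internal_group_in_Pt {X A P : C} (f : Hom A X) (s : Hom X A)
    (p1 : Hom P A) (p2 : Hom P A) (m : Hom P A) (i : Hom A A) : Prop :=
  (
      f \o m = f \o p1 /\
      (forall u : Hom X P, p1 \o u = s -> p2 \o u = s -> m \o u = s) /\
      f \o i = f /\ i \o s = s/\
      (forall (Y : C) (u : Hom Y P), p1 \o u = s \o f \o p2 \o u ->
          m \o u = p2 \o u) /\
      (forall (Y : C) (u : Hom Y P), p2 \o u = s \o f \o p1 \o u ->
          m \o u = p1 \o u) /\
      (forall (Y : C) (u : Hom Y P), p1 \o u = i \o p2 \o u ->
          m \o u = s \o f \o p2 \o u) /\
      (forall (Y : C) (u : Hom Y P), p2 \o u = i \o p1 \o u ->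
          m \o u = s \o f \o p1 \o u)/\
      (forall (Y : C) (u v w w' : Hom Y P),
          p1 \o v = m \o u -> p1 \o w = p2 \o u -> p2 \o w = p2 \o v ->
          p1 \o w' = p1 \o u -> p2 \o w' = m \o w ->
          m \o v = m \o w')).

Definition reflexive_graph {X X1 : C} (d0 d1 : Hom X1 X) (s0 : Hom X X1) : Prop :=
  d0 \o s0 = idm X /\ d1 \o s0 = idm X.

(* An internal groupoid structure on the reflexive graph, where (P, p1, p2)
   is the object X1 x_X X1 of composable pairs, the pullback of d1 along d0:
   a pair (g, h) with d1 g = d0 h is composed to m (g,h) : d0 g -> d1 h. *)
Definition groupoid_structure {X X1 P : C} (d0 d1 : Hom X1 X) (s0 : Hom X X1)
    (p1 p2 : Hom P X1) (m : Hom P X1) (i : Hom X1 X1) : Prop :=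
  ( d0 \o m = d0 \o p1 /\ d1 \o m = d1 \o p2 /\
      d0 \o i = d1 /\ d1 \o i = d0/\
      (forall (Y : C) (u : Hom Y P), p1 \o u = s0 \o d0 \o p2 \o u ->
          m \o u = p2 \o u) /\
      (forall (Y : C) (u : Hom Y P), p2 \o u = s0 \o d1 \o p1 \o u ->
          m \o u = p1 \o u) /\
      (forall (Y : C) (u : Hom Y P), p2 \o u = i \o p1 \o u ->
          m \o u = s0 \o d0 \o p1 \o u) /\
      (forall (Y : C) (u : Hom Y P), p1 \o u = i \o p2 \o u ->
          m \o u = s0 \o d1 \o p2 \o u)/\
      (forall (Y : C) (u v w w' : Hom Y P),
          p1 \o v = m \o u -> p1 \o w = p2 \o u -> p2 \o w = p2 \o v ->
          p1 \o w' = p1 \o u -> p2 \o w' = m \o w ->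
          m \o v = m \o w')).

End Defs.

(* Main.v *)
Require Import Defs.

Ltac ra := repeat rewrite <- comp_assoc.
Ltac ra_in H := repeat rewrite <- comp_assoc in H.

Section H.
Context {C : Category}.

Lemma pb_ext {A B Z P : C} (f : Hom A Z) (g : Hom B Z) p1 p2 :
  is_pullback f g p1 p2 -> forall Y (v w : Hom Y P),
  p1 \o v = p1 \o w -> p2 \o v = p2 \o w -> v = w.
Proof.
  intros [Hc H] Y v w E1 E2.
  destruct (H Y (p1 \o v) (p2 \o v)) as [u [_ Hu]].
  { rewrite !comp_assoc, Hc; reflexivity. }
  rewrite (Hu v) by auto. symmetry; apply Hu; auto.
Qed.

Lemma pb_lift {A B Z P : C} (f : Hom A Z) (g : Hom B Z) p1 p2 :
  is_pullback f g p1 p2 -> forall Y q1 q2, f \o q1 = g \o q2 ->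
  exists u : Hom Y P, p1 \o u = q1 /\ p2 \o u = q2.
Proof.
  intros [Hc H] Y q1 q2 E. destruct (H Y q1 q2 E) as [u [Hu _]]. eauto.
Qed.

Lemma prod_ext {A B P : C} (p1 : Hom P A) (p2 : Hom P B) :
  is_product p1 p2 -> forall Y (v w : Hom Y P),
  p1 \o v = p1 \o w -> p2 \o v = p2 \o w -> v = w.
Proof.
  intros H Y v w E1 E2.
  destruct (H Y (p1 \o v) (p2 \o v)) as [u [_ Hu]].
  rewrite (Hu v) by auto. symmetry; apply Hu; auto.
Qed.

Lemma prod_lift {A B P : C} (p1 : Hom P A) (p2 : Hom P B) :
  is_product p1 p2 -> forall Y q1 q2,
  exists u : Hom Y P, p1 \o u = q1 /\ p2 \o u = q2.
Proof.
  intros H Y q1 q2. destruct (H Y q1 q2) as [u [Hu _]]. eauto.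
Qed.
End H.
Arguments pb_ext {C A B Z P f g p1 p2} _ _ _ _ _ _.
Arguments pb_lift {C A B Z P f g p1 p2} _ {Y q1 q2} _.
Arguments prod_ext {C A B P p1 p2} _ _ _ _ _ _.
Arguments prod_lift {C A B P p1 p2} _ _ _ _.

Theorem mainTheorem13 (C : Category) :
  finitely_complete C ->
  (* every internal group in Pt_X C has an isomorphism as underlying split epi *)
  (forall (X A P : C) (f : Hom A X) (s : Hom X A) (p1 p2 : Hom P A)
          (m : Hom P A) (i : Hom A A),
      f \o s = idm X -> is_pullback f f p1 p2 ->
      internal_group_in_Pt f s p1 p2 m i -> is_iso f) ->
  (* every reflexive graph admitting a groupoid structure is a relation *)
  forall (X X1 P : C) (d0 d1 : Hom X1 X) (s0 : Hom X X1)
         (p1 p2 : Hom P X1) (m : Hom P X1) (i : Hom X1 X1),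
    reflexive_graph d0 d1 s0 -> is_pullback d1 d0 p1 p2 ->
    groupoid_structure d0 d1 s0 p1 p2 m i ->
    forall (XX : C) (q0 q1 : Hom XX X) (e : Hom X1 XX),
      is_product q0 q1 -> q0 \o e = d0 -> q1 \o e = d1 -> is_mono e.
Proof.
  intros [_ Hpb] Hgrp X X1 P d0 d1 s0 p1 p2 m i [Hs0 Hs1] HP HG XX q0 q1 e
    Hprod He0 He1.
  destruct HG as (Gm0 & Gm1 & Gi0 & Gi1 & Gl & Gr & Ginv1 & Ginv2 & Gass).
  assert (Gl' : forall Y (u : Hom Y P), p1 \o u = s0 \o (d0 \o (p2 \o u)) -> m \o u = p2 \o u)
    by (intros; apply Gl; rewrite !comp_assoc in *; auto).
  assert (Gr' : forall Y (u : Hom Y P), p2 \o u = s0 \o (d1 \o (p1 \o u)) -> m \o u = p1 \o u)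
    by (intros; apply Gr; rewrite !comp_assoc in *; auto).
  assert (Ginv1' : forall Y (u : Hom Y P), p2 \o u = i \o (p1 \o u) -> m \o u = s0 \o (d0 \o (p1 \o u)))
    by (intros; ra; rewrite Ginv1; [ra; auto| rewrite !comp_assoc in *; auto]).
  assert (Ginv2' : forall Y (u : Hom Y P), p1 \o u = i \o (p2 \o u) -> m \o u = s0 \o (d1 \o (p2 \o u)))
    by (intros; ra; rewrite Ginv2; [ra; auto| rewrite !comp_assoc in *; auto]).
  clear Gl Gr Ginv1 Ginv2. rename Gl' into Gl, Gr' into Gr, Ginv1' into Ginv1, Ginv2' into Ginv2.
  destruct (prod_lift Hprod X (idm X) (idm X)) as [dl [Hd0 Hd1]].
  destruct (Hpb _ _ _ e dl) as (A & a & x & HA).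
  assert (Hea : e \o a = dl \o x) by apply HA.
  assert (Ha0 : d0 \o a = x).
  { rewrite <- He0, <- comp_assoc, Hea, comp_assoc, Hd0, comp_id_l. auto. }
  assert (Ha1 : d1 \o a = x).
  { rewrite <- He1, <- comp_assoc, Hea, comp_assoc, Hd1, comp_id_l. auto. }
  assert (Hloop : forall Y (b : Hom Y X1), d0 \o b = d1 \o b ->
            exists u, a \o u = b /\ x \o u = d0 \o b).
  { intros Y b Hb. apply (pb_lift HA).
    apply (prod_ext Hprod); rewrite !comp_assoc.
    - rewrite He0, Hd0, comp_id_l; auto.
    - rewrite He1, Hd1, comp_id_l; auto. }
  assert (Hamono : forall Y (u v : Hom Y A), a \o u = a \o v -> u = v).
  { intros Y u v E. apply (pb_ext HA); auto.
    rewrite <- Ha0, <- !comp_assoc, E; auto. }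
  assert (His0 : i \o s0 = s0).
  { destruct (pb_lift HP (q1:=s0) (q2:=i \o s0)) as [t [Ht1 Ht2]].
    { rewrite comp_assoc, Gi0; auto. }
    assert (E1 : m \o t = i \o s0).
    { rewrite <- Ht2. apply Gl. rewrite Ht2, Ht1, (comp_assoc d0), Gi0, Hs1, comp_id_r. auto. }
    assert (E2 : m \o t = s0).
    { rewrite Ginv1, Ht1, Hs0, comp_id_r; auto.
      rewrite Ht1, Ht2; auto. }
    congruence. }
  destruct (Hloop X s0) as [s [Hs Hxs]]; [congruence|].
  rewrite Hs0 in Hxs.
  destruct (Hpb _ _ _ x x) as (P' & r1 & r2 & HP').
  assert (Hx : x \o r1 = x \o r2) by apply HP'.
  destruct (pb_lift HP (q1 := a \o r1) (q2 := a \o r2)) as [w0 [Hw1 Hw2]].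
  { rewrite !comp_assoc, Ha1, Ha0; auto. }
  destruct (Hloop _ (m \o w0)) as [mA [HmA HxmA]].
  { rewrite !comp_assoc, Gm0, Gm1, <- !comp_assoc, Hw1, Hw2, !comp_assoc, Ha0, Ha1; auto. }
  assert (HxmA' : x \o mA = x \o r1).
  { rewrite HxmA, comp_assoc, Gm0, <- comp_assoc, Hw1, comp_assoc, Ha0; auto. }
  destruct (Hloop _ (i \o a)) as [iA [HiA HxiA]].
  { rewrite !comp_assoc, Gi0, Gi1, Ha0, Ha1; auto. }
  assert (HxiA' : x \o iA = x) by (rewrite HxiA, comp_assoc, Gi0, Ha1; auto).
  assert (Hw : forall Y (u : Hom Y P'), p1 \o (w0 \o u) = a \o (r1 \o u)
                 /\ p2 \o (w0 \o u) = a \o (r2 \o u)).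
  { intros; rewrite !comp_assoc, Hw1, Hw2; auto. }
  assert (HmAu : forall Y (u : Hom Y P'), a \o (mA \o u) = m \o (w0 \o u)).
  { intros; rewrite !comp_assoc, HmA; auto. }
  assert (Hgroup : internal_group_in_Pt x s r1 r2 mA iA).
  { unfold internal_group_in_Pt.
    split; [exact HxmA'|]. split.
    { intros u Hu1 Hu2. apply Hamono. rewrite HmAu, Gl; destruct (Hw _ u) as [W1 W2].
      - rewrite W2, Hu2; auto.
      - rewrite W1, W2, Hu1, Hu2, Hs, Hs0, comp_id_r; auto. }
    split; [exact HxiA'|]. split.
    { apply Hamono. rewrite comp_assoc, HiA, <- comp_assoc, Hs; auto. }
    split.
    { intros Y u Hu. apply Hamono. ra_in Hu. destruct (Hw _ u) as [W1 W2].
      rewrite HmAu, Gl, W2; auto.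
      rewrite W1, W2, Hu, (comp_assoc d0), Ha0, (comp_assoc a s), Hs; auto. }
    split.
    { intros Y u Hu. apply Hamono. ra_in Hu. destruct (Hw _ u) as [W1 W2].
      rewrite HmAu, Gr, W1; auto.
      rewrite W1, W2, Hu, (comp_assoc d1), Ha1, (comp_assoc a s), Hs; auto. }
    split.
    { intros Y u Hu. apply Hamono. ra_in Hu. ra. destruct (Hw _ u) as [W1 W2].
      rewrite HmAu, Ginv2, W2, (comp_assoc d1), Ha1, (comp_assoc a s), Hs; auto.
      rewrite W1, W2, Hu, comp_assoc, HiA; ra; auto. }
    split.
    { intros Y u Hu. apply Hamono. ra_in Hu. ra. destruct (Hw _ u) as [W1 W2].
      rewrite HmAu, Ginv1, W1, (comp_assoc d0), Ha0, (comp_assoc a s), Hs; auto.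
      rewrite W1, W2, Hu, comp_assoc, HiA; ra; auto. }
    { intros Y u v w w' E1 E2 E3 E4 E5. apply Hamono. rewrite !HmAu.
      destruct (Hw _ u) as [U1 U2]. destruct (Hw _ v) as [V1 V2].
      destruct (Hw _ w) as [W1 W2]. destruct (Hw _ w') as [W'1 W'2].
      apply Gass with (u := w0 \o u) (w := w0 \o w).
      - rewrite V1, E1, HmAu; auto.
      - rewrite W1, U2, E2; auto.
      - rewrite W2, V2, E3; auto.
      - rewrite W'1, U1, E4; auto.
      - rewrite W'2, E5, HmAu; auto. } }
  destruct (Hgrp X A P' x s r1 r2 mA iA Hxs HP' Hgroup) as [g [Hg1 Hg2]].
  assert (Hsx : s \o x = idm A).
  { assert (s = g) as ->; auto.
    rewrite <- (comp_id_l s), <- Hg1, <- comp_assoc, Hxs, comp_id_r; auto. }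
  assert (Htriv : forall Y (b : Hom Y X1), d0 \o b = d1 \o b -> b = s0 \o (d0 \o b)).
  { intros Y b Hb. destruct (Hloop _ b Hb) as [u [Hu1 Hu2]].
    rewrite <- Hu2, <- Hu1, comp_assoc, <- Hs, <- (comp_assoc a), Hsx,
      comp_id_r; auto. }
  intros Y g1 g2 E.
  assert (D0 : d0 \o g1 = d0 \o g2) by (rewrite <- He0, <- !comp_assoc, E; auto).
  assert (D1 : d1 \o g1 = d1 \o g2) by (rewrite <- He1, <- !comp_assoc, E; auto).
  destruct (pb_lift HP (q1 := g1) (q2 := i \o g2)) as [u [U1 U2]].
  { rewrite comp_assoc, Gi0; auto. }
  destruct (pb_lift HP (q1 := m \o u) (q2 := g2)) as [v [V1 V2]].
  { rewrite comp_assoc, Gm1, <- comp_assoc, U2, comp_assoc, Gi1; auto. }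
  destruct (pb_lift HP (q1 := i \o g2) (q2 := g2)) as [w [W1 W2]].
  { rewrite comp_assoc, Gi1; auto. }
  destruct (pb_lift HP (q1 := g1) (q2 := m \o w)) as [w' [W'1 W'2]].
  { rewrite comp_assoc, Gm0, <- comp_assoc, W1, comp_assoc, Gi0; auto. }
  assert (Hc : m \o u = s0 \o (d0 \o g1)).
  { rewrite (Htriv _ (m \o u)).
    - rewrite (comp_assoc d0 m), Gm0, <- comp_assoc, U1; auto.
    - rewrite !comp_assoc, Gm0, Gm1, <- !comp_assoc, U1, U2, comp_assoc, Gi1; auto. }
  assert (Hk : m \o w = s0 \o (d1 \o g2)).
  { rewrite Ginv2, W2; auto. rewrite W1, W2; auto. }
  assert (Ev : m \o v = g2).
  { rewrite Gl, V2; auto. rewrite V1, V2, Hc, D0; auto. }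
  assert (Ew' : m \o w' = g1).
  { rewrite Gr, W'1; auto. rewrite W'1, W'2, Hk, D1; auto. }
  rewrite <- Ev, <- Ew'.
  symmetry; apply Gass with (u := u) (w := w); congruence.
Qed.
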